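(* Let $(V,\operatorname{val}_V)$ be a valued vector space of finite dimension $r$ over a valued field $(k,\nu)$ with value group $\mathbb{Z}$, such that $\nu\colon k\setminus\{0\}\to\mathbb{Z}$ is surjective, and fix $x\in k$ with $\nu(x)=1$. Suppose there exists a discriminant function $\operatorname{Disc}\colon\mathbb{B}_V\to\mathbb{Z}$ (with respect to this $x$). Consider the following procedure, applied to a $k$-basis $B_1,\dots,B_r$ of $V$: for $d=1,\dots,r$ in turn, first replace $B_d$ by $x^{-\operatorname{val}_V(B_d)}B_d$; then, as long as there exist $\alpha_1,\dots,\alpha_{d-1}\in k$ with $\operatorname{val}_V(\alpha_1B_1+\cdots+\alpha_{d-1}B_{d-1}+B_d)>0$, choose such $\alpha_1,\dots,\alpha_{d-1}$ and replace $B_d$ by $x^{-1}(\alpha_1B_1+\cdots+\alpha_{d-1}B_{d-1}+B_d)$. Finally return $B_1,\dots,B_r$. Then this procedure terminates.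
   Context: A valuation $\nu$ on $k$ and a value function $\operatorname{val}_V$ on $V$ are as usual: $\nu(a)=\infty\iff a=0$, $\nu(ab)=\nu(a)+\nu(b)$, $\nu(a+b)\ge\min(\nu(a),\nu(b))$; $\operatorname{val}_V(v)=\infty\iff v=0$, $\operatorname{val}_V(av)=\nu(a)+\operatorname{val}_V(v)$, $\operatorname{val}_V(v+w)\ge\min(\operatorname{val}_V(v),\operatorname{val}_V(w))$. An element $v$ is integral if $\operatorname{val}_V(v)\ge0$. $\mathbb{B}_V$ denotes the set of all (ordered) $k$-bases of $V$. A map $\operatorname{Disc}\colon\mathbb{B}_V\to\mathbb{Z}$ is a discriminant function on $V$ if for every basis $B_1,\dots,B_r$ of $V$: (i) $\gamma:=\operatorname{Disc}(\{B_1,\dots,B_r\})\ge0$ whenever all $B_i$ are integral; (ii) whenever there are $d\le r$ and $\alpha_1,\dots,\alpha_{d-1}\in k$ such that $\tilde B_d:=\alpha_1B_1+\cdots+\alpha_{d-1}B_{d-1}+B_d$ satisfies $\operatorname{val}_V(\tilde B_d)>\min_{i=1}^d\operatorname{val}_V(B_i)$, then $\operatorname{Disc}(\{B_1,\dots,B_{d-1},x^{-1}\tilde B_d,B_{d+1},\dots,B_r\})<\gamma$. *)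

(* Defs.v *)
From HB Require Import structures.
From mathcomp Require Import all_boot all_order all_algebra.
Set Implicit Arguments. Unset Strict Implicit. Unset Printing Implicit Defensive.
Import Order.TTheory GRing.Theory Num.Theory.
Local Open Scope ring_scope.

(* Valuations with values in Z ∪ {∞} are encoded as maps to [int];
   the value at 0 (which is ∞) is never used: all axioms are stated for
   nonzero arguments, and comparisons with possibly-zero vectors go through
   [vgt] / [integral] below, which treat 0 as having value ∞. *)

Section Defs.
Variables (k : fieldType) (V : vectType k).

Definition is_valuation (nu : k -> int) : Prop :=
  (forall a b : k, a != 0 -> b != 0 -> nu (a * b) = nu a + nu b) /\
  (forall a b : k, a != 0 -> b != 0 -> a + b != 0 ->
     Num.min (nu a) (nu b) <= nu (a + b)).

Definition is_value_function (nu : k -> int) (val : V -> int) : Prop :=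
  (forall (a : k) (v : V), a != 0 -> v != 0 -> val (a *: v) = nu a + val v) /\
  (forall v w : V, v != 0 -> w != 0 -> v + w != 0 ->
     Num.min (val v) (val w) <= val (v + w)).

Definition vgt (val : V -> int) (w : V) (c : int) : bool :=
  (w == 0) || (c < val w).

Definition integral (val : V -> int) (w : V) : bool :=
  (w == 0) || (0 <= val w).

(* alpha_1 B_1 + ... + alpha_{d-1} B_{d-1} + B_d  (0-indexed: indices j < d, and d) *)
Definition combo (B : seq V) (d : nat) (alpha : nat -> k) : V :=
  \sum_(j < d) alpha j *: nth 0 B j + nth 0 B d.

(* Disc is a discriminant function on V with respect to x.  Ordered bases
   are sequences B with [basis_of fullv B]; indices are 0-based. *)
Definition is_discriminant (x : k) (val : V -> int) (Disc : seq V -> int) : Prop :=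
  (forall B : seq V, basis_of fullv B -> all (integral val) B -> 0 <= Disc B) /\
  (forall (B : seq V) (d : nat) (alpha : nat -> k),
     basis_of fullv B -> (d < size B)%N ->
     vgt val (combo B d alpha)
         (\big[Num.min/val (nth 0 B d)]_(j < d.+1) val (nth 0 B j)) ->
     Disc (set_nth 0 B d (x^-1 *: combo B d alpha)) < Disc B).

Definition normalize (x : k) (val : V -> int) (B : seq V) (d : nat) : seq V :=
  set_nth 0 B d (x ^ (- val (nth 0 B d)) *: nth 0 B d).

(* The procedure as a nondeterministic transition system.
   A state (d, B) with d < r means: we are in the inner loop of stage d
   (0-indexed), B_d having already been normalized.  The state (r, B) is final. *)
Definition proc_init (r : nat) (x : k) (val : V -> int) (B : seq V) : nat * seq V :=
  (0%N, if (0 < r)%N then normalize x val B 0 else B).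

Inductive proc_step (r : nat) (x : k) (val : V -> int) :
    nat * seq V -> nat * seq V -> Prop :=
  | step_inner (d : nat) (B : seq V) (alpha : nat -> k) :
      (d < r)%N -> vgt val (combo B d alpha) 0 ->
      proc_step r x val (d, B) (d, set_nth 0 B d (x^-1 *: combo B d alpha))
  | step_next (d : nat) (B : seq V) :
      (d < r)%N -> (forall alpha : nat -> k, ~~ vgt val (combo B d alpha) 0) ->
      proc_step r x val (d, B)
        (d.+1, if (d.+1 < r)%N then normalize x val B d.+1 else B).

End Defs.

(* Main.v *)
Require Import Defs.
From HB Require Import structures.
From mathcomp Require Import all_boot all_order all_algebra.
From mathcomp Require Import zify.
Import Order.TTheory GRing.Theory Num.Theory.
Local Open Scope ring_scope.
Set Implicit Arguments. Unset Strict Implicit.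

Section Aux.
Variables (k : fieldType) (V : vectType k).

Lemma nu1 (nu : k -> int) : is_valuation nu -> nu 1 = 0.
Proof.
move=> [hM _]; have := hM 1 1 (oner_neq0 _) (oner_neq0 _).
rewrite mulr1 => h; lia.
Qed.

Lemma nuV (nu : k -> int) y : is_valuation nu -> y != 0 -> nu y^-1 = - nu y.
Proof.
move=> hv hy; have [hM _] := hv.
have := hM y y^-1 hy (invr_neq0 hy); rewrite mulfV // nu1 // => h; lia.
Qed.

Lemma nuXn (nu : k -> int) x n : is_valuation nu -> x != 0 -> nu x = 1 ->
  nu (x ^+ n) = n%:Z.
Proof.
move=> hv hx h1; have [hM _] := hv.
elim: n => [|n IH]; first by rewrite expr0 nu1.
rewrite exprS hM // ?expf_neq0 // IH h1; lia.
Qed.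

Lemma nuXz (nu : k -> int) x z : is_valuation nu -> x != 0 -> nu x = 1 ->
  nu (x ^ z) = z.
Proof.
move=> hv hx h1; case: z => n.
  by rewrite nuXn.
rewrite NegzE -exprnN nuV ?expf_neq0 // nuXn //.
Qed.

Lemma basis_repl (B B' : seq V) : basis_of fullv B -> size B' = size B ->
  (forall i, (i < size B)%N -> nth 0 B i \in <<B'>>%VS) -> basis_of fullv B'.
Proof.
move=> hB hs hi.
have hsz : size B = \dim (fullv : {vspace V}).
  apply/eqP; rewrite eqn_leq.
  by move: (hB); rewrite basisEdim => /andP[_ ->]; move: hB; rewrite basisEfree => /and3P[_ _ ->].
rewrite basisEdim hs hsz leqnn andbT.
move: hB; rewrite /basis_of => /andP[/eqP <- _].
apply/span_subvP => v /(nthP 0) [i hi' <-]; exact: hi.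
Qed.

Lemma basis_size (B : seq V) : basis_of fullv B -> size B = \dim (fullv : {vspace V}).
Proof.
move=> hB; apply/eqP; rewrite eqn_leq.
by move: (hB); rewrite basisEdim => /andP[_ ->]; move: hB; rewrite basisEfree => /and3P[_ _ ->].
Qed.

Lemma basis_nth_neq0 (B : seq V) i : basis_of fullv B -> (i < size B)%N -> nth 0 B i != 0.
Proof.
move=> /andP[_]; rewrite free_directv => /andP[h0 _] hi.
apply/negP => /eqP e; move: h0; rewrite -e mem_nth //.
Qed.

Lemma nth_in_span (B : seq V) i : (i < size B)%N -> nth 0 B i \in <<B>>%VS.
Proof. by move=> hi; apply: memv_span; apply: mem_nth. Qed.

Lemma basis_scale (B B' : seq V) (s : nat -> k) : basis_of fullv B -> size B' = size B ->
  (forall i, (i < size B)%N -> s i != 0 /\ nth 0 B' i = s i *: nth 0 B i) ->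
  basis_of fullv B'.
Proof.
move=> hB hs hi; apply: (basis_repl hB hs) => i lt.
have [h0 e] := hi i lt.
have -> : nth 0 B i = (s i)^-1 *: nth 0 B' i by rewrite e scalerA mulVf // scale1r.
by apply: memvZ; apply: nth_in_span; rewrite hs.
Qed.

Lemma basis_inner (B : seq V) d (alpha : nat -> k) c : basis_of fullv B ->
  (d < size B)%N -> c != 0 -> basis_of fullv (set_nth 0 B d (c *: combo B d alpha)).
Proof.
move=> hB hd hc.
have hs : size (set_nth 0 B d (c *: combo B d alpha)) = size B.
  by rewrite size_set_nth; apply/maxn_idPr.
apply: (basis_repl hB hs) => i lt.
have hj : forall j, (j < size B)%N -> j != d -> nth 0 B j \in
    <<set_nth 0%R B d (c *: combo B d alpha)%R>>%VS.
  move=> j hj ne; have := nth_in_span (B := set_nth 0%R B d (c *: combo B d alpha)%R) (i := j).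
  by rewrite hs nth_set_nth /= (negPf ne); apply.
case: (eqVneq i d) => [->|ne]; last exact: hj.
have -> : nth 0 B d = c^-1 *: (c *: combo B d alpha) - \sum_(j < d) alpha j *: nth 0 B j.
  by rewrite scalerA mulVf // scale1r /combo addrC addKr.
apply: memvB.
  apply: memvZ; have := nth_in_span (B := set_nth 0%R B d (c *: combo B d alpha)%R) (i := d).
  by rewrite hs nth_set_nth /= eqxx; apply.
apply: memv_suml => j _; apply: memvZ; apply: hj.
  by apply: ltn_trans hd.
by rewrite neq_ltn ltn_ord.
Qed.

End Aux.

Section Main.
Variables (k : fieldType) (V : vectType k) (r : nat)
    (nu : k -> int) (val : V -> int) (x : k) (Disc : seq V -> int).
Variables (hv : is_valuation nu) (hval : is_value_function nu val)
  (hx : x != 0) (hx1 : nu x = 1) (hD : is_discriminant x val Disc).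

Definition tailnorm d (B : seq V) := mkseq (fun i => if (i <= d)%N then nth 0 B i
   else x ^ (- val (nth 0 B i)) *: nth 0 B i) (size B).

Lemma size_tailnorm d B : size (tailnorm d B) = size B.
Proof. by rewrite size_mkseq. Qed.

Lemma nth_tailnorm d B i : (i < size B)%N -> nth 0 (tailnorm d B) i =
  if (i <= d)%N then nth 0 B i else x ^ (- val (nth 0 B i)) *: nth 0 B i.
Proof. by move=> hi; rewrite nth_mkseq. Qed.

Lemma val_xz z v : v != 0 -> val (x ^ z *: v) = z + val v.
Proof. by move=> hv0; rewrite hval.1 ?expfz_neq0 // nuXz. Qed.

Lemma tailnorm_basis d B : basis_of fullv B -> basis_of fullv (tailnorm d B).
Proof.
move=> hB; apply: (basis_scale (s := fun i => if (i <= d)%N then 1 else x ^ (- val (nth 0 B i)))) hB _ _.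
  exact: size_tailnorm.
move=> i hi; rewrite nth_tailnorm //; case: ifP => _; split => //.
- exact: oner_neq0.
- by rewrite scale1r.
- exact: expfz_neq0.
Qed.

Lemma tailnorm_set d B w : (d < size B)%N ->
  tailnorm d (set_nth 0 B d w) = set_nth 0 (tailnorm d B) d w.
Proof.
move=> hd; have hs : size (set_nth 0 B d w) = size B.
  by rewrite size_set_nth; apply/maxn_idPr.
apply: (@eq_from_nth _ 0).
  by rewrite size_tailnorm hs size_set_nth size_tailnorm; apply/esym/maxn_idPr.
move=> i; rewrite size_tailnorm hs => hi.
rewrite nth_tailnorm ?hs // !nth_set_nth /= nth_tailnorm //.
case: eqP => [->|ne]; first by rewrite leqnn.
by [].
Qed.

Lemma combo_tail d B alpha : (d < size B)%N -> combo (tailnorm d B) d alpha = combo B d alpha.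
Proof.
move=> hd; rewrite /combo nth_tailnorm // leqnn; congr (_ + _).
apply: eq_bigr => j _; rewrite nth_tailnorm ?(ltnW (leq_ltn_trans (ltn_ord j) hd)) //.
  by rewrite ltnW.
Qed.

Lemma min_tail d B : (d < size B)%N ->
  \big[Num.min/val (nth 0 (tailnorm d B) d)]_(j < d.+1) val (nth 0 (tailnorm d B) j) =
  \big[Num.min/val (nth 0 B d)]_(j < d.+1) val (nth 0 B j).
Proof.
move=> hd; rewrite nth_tailnorm // leqnn.
apply: eq_bigr => j _; rewrite nth_tailnorm.
  by rewrite -ltnS ltn_ord.
exact: leq_trans (ltn_ord j) hd.
Qed.

Lemma min_le0 d B : \big[Num.min/val (nth 0 B d)]_(j < d.+1) val (nth 0 B j) <= val (nth 0 B 0).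
Proof. by rewrite big_ord_recl ge_min lexx. Qed.

Definition Inv (s : nat * seq V) := let (d, B) := s in
  [/\ size B = r, basis_of fullv B,
      (forall j, (j <= d)%N -> (j < r)%N -> 0 <= val (nth 0 B j)) &
      ((0 < r)%N -> val (nth 0 B 0) <= 0)].

Lemma normalize_facts B i : basis_of fullv B -> (i < size B)%N ->
  [/\ size (normalize x val B i) = size B, basis_of fullv (normalize x val B i),
      val (nth 0 (normalize x val B i) i) = 0 &
      forall j, j != i -> nth 0 (normalize x val B i) j = nth 0 B j].
Proof.
move=> hB hi.
have hs : size (normalize x val B i) = size B.
  by rewrite size_set_nth; apply/maxn_idPr.
split => //.
- apply: (basis_scale (s := fun j => if j == i then x ^ (- val (nth 0 B i)) else 1)) hB hs _.
  move=> j hj; rewrite nth_set_nth /=; case: (eqVneq j i) => [->|ne].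
    by split => //; exact: expfz_neq0.
  by split; [exact: oner_neq0 | rewrite scale1r].
- rewrite nth_set_nth /= eqxx val_xz ?basis_nth_neq0 //; lia.
- by move=> j ne; rewrite nth_set_nth /= (negPf ne).
Qed.

Lemma disc_ge0 d B : Inv (d, B) -> (d < r)%N -> 0 <= Disc (tailnorm d B).
Proof.
move=> [hs hB hint h0] hd; apply: hD.1; first exact: tailnorm_basis.
apply/(all_nthP 0) => i; rewrite size_tailnorm => hi.
rewrite /integral; apply/orP; right; rewrite nth_tailnorm //.
case: ifP => hid; first by apply: hint => //; rewrite -hs.
rewrite val_xz ?basis_nth_neq0 //; lia.
Qed.

Lemma step_facts s s' : Inv s -> proc_step r x val s s' ->
  [/\ Inv s', (s.1 < r)%N, (s.1 <= s'.1)%N &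
      (s'.1 = s.1 -> Disc (tailnorm s.1 s'.2) < Disc (tailnorm s.1 s.2))].
Proof.
move=> + hst; case: hst => [d B alpha hd hvg | d B hd _] [hs hB hint h0] /=.
-
  have hdB : (d < size B)%N by rewrite hs.
  have hxi : x^-1 != 0 by rewrite invr_neq0.
  have hB' := basis_inner alpha hB hdB hxi.
  have hs' : size (set_nth 0 B d (x^-1 *: combo B d alpha)) = size B.
    by rewrite size_set_nth; apply/maxn_idPr.
  have hne : x^-1 *: combo B d alpha != 0.
    have := basis_nth_neq0 hB' (i := d); rewrite hs' nth_set_nth /= eqxx; exact.
  have hc0 : combo B d alpha != 0 by move: hne; rewrite scaler_eq0 negb_or => /andP[].
  have hvc : 0 < val (combo B d alpha) by move: hvg; rewrite /vgt (negPf hc0).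
  have hB00 : (0 < r)%N by apply: leq_ltn_trans hd.
  split => //.
  + split => //; first by rewrite hs'.
      move=> j hj hjr; rewrite nth_set_nth /=; case: ifP => [/eqP e|ne].
        rewrite hval.1 // nuV // hx1; lia.
      exact: hint.
    move=> _; rewrite nth_set_nth /=; case: ifP => [/eqP e|_]; last exact: h0.
    subst d; exfalso; move: hvc; rewrite /combo big_ord0 add0r => hvc.
    have := h0 hB00; lia.
  + move=> _; rewrite tailnorm_set //.
    rewrite -(combo_tail alpha hdB).
    apply: hD.2; first exact: tailnorm_basis.
      by rewrite size_tailnorm.
    rewrite combo_tail // min_tail //; rewrite /vgt (negPf hc0) /=.
    apply: le_lt_trans (min_le0 _ _) _; apply: le_lt_trans hvc; exact: h0.
-
  split => //; last by move=> e; exfalso; lia.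
  case: ifP => hd1.
  + have hdB : (d.+1 < size B)%N by rewrite hs.
    have [hsn hBn hvn hon] := normalize_facts hB hdB.
    split => //; first by rewrite hsn.
      move=> j hj hjr; case: (eqVneq j d.+1) => [->|ne]; first by rewrite hvn.
      rewrite hon //; apply: hint => //; move: hj ne; rewrite leq_eqVlt => /orP[/eqP->|]; first by rewrite eqxx.
      by move=> h _; rewrite -ltnS.
    by move=> h; rewrite hon //; exact: h0.
  + split => // j hj hjr; apply: hint => //.
    move: hj; rewrite leq_eqVlt => /orP[/eqP e|]; last by [].
    by exfalso; subst j; move: hd1; rewrite hjr.
Qed.

End Main.
Unset Implicit Arguments.

Theorem mainTheorem4 (k : fieldType) (V : vectType k) (r : nat)
    (nu : k -> int) (val : V -> int) (x : k) (Disc : seq V -> int) :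
  \dim (fullv : {vspace V}) = r ->
  is_valuation nu ->
  (forall n : int, exists2 a : k, a != 0 & nu a = n) ->
  is_value_function nu val ->
  x != 0 -> nu x = 1 ->
  is_discriminant x val Disc ->
  forall B0 : seq V, basis_of fullv B0 ->
  ~ (exists run : nat -> nat * seq V,
       run 0%N = proc_init r x val B0 /\
       forall n : nat, proc_step r x val (run n) (run n.+1)).
Proof.
move=> hdim hv _ hval hx hx1 hD B0 hB0 [run [h0 hstep]].
have hinv : forall n, Inv r val (run n).
  elim=> [|n IH].
    rewrite h0 /proc_init; have hs0 : size B0 = r by rewrite basis_size.
    case: ifP => hr.
      have hdB : (0 < size B0)%N by rewrite hs0.
      have [hsn hBn hvn _] := normalize_facts hv hval hx hx1 hB0 hdB.
      split => //; first by rewrite hsn.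
        by move=> j; rewrite leqn0 => /eqP -> _; rewrite hvn.
      by move=> _; rewrite hvn.
    split => //; first by move=> j _ hj; move: hr; rewrite (leq_ltn_trans _ hj).
    by rewrite hr.
  by have [] := step_facts hv hval hx hx1 hD IH (hstep n).
pose dd n := (run n).1.
pose M n := absz (Disc (tailnorm val x (dd n) (run n).2)).
have facts : forall n, [/\ (dd n < r)%N, (dd n <= dd n.+1)%N &
    (dd n.+1 = dd n -> (M n.+1 < M n)%N)].
  move=> n; rewrite /M /dd.
  have [_ hdr hle hdec] := step_facts hv hval hx hx1 hD (hinv n) (hstep n).
  split => // e.
  have I' := hinv n.+1; move: I'; case: (run n.+1) e hdec => d' B' /= -> hdec I'.
  have h1 := disc_ge0 hv hval hx hx1 hD I' hdr.
  have h2 := hdec erefl; lia.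
have A : forall m n, (M n < m)%N -> (forall n', (dd n < dd n')%N -> False) -> False.
  elim=> [|m IH] n hm hfut //.
  have [_ hle hdec] := facts n.
  case: (ltngtP (dd n) (dd n.+1)) hle => [lt _|gt|e _].
  - exact: hfut lt.
  - by [].
  - apply: (IH n.+1).
      have := hdec (esym e); lia.
    by move=> n'; rewrite -e; apply: hfut.
have Bk : forall K n, (r - dd n <= K)%N -> False.
  elim=> [|K IH] n hK.
    have [hdr _ _] := facts n; lia.
  apply: (A (M n).+1 n) => // n' lt; apply: (IH n'); lia.
exact: (Bk r 0%N (leq_subr _ _)).
Qed.
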